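(* Let $\mathbb K$ be an algebraically closed field, let $W\subset\mathbb A^n_{\mathbb K}$ be a smooth complete intersection of codimension $r$ with vanishing ideal $I_W=\langle f_1,\dots,f_r\rangle\subset\mathbb K[x_1,\dots,x_n]$, $d=n-r$, and let $h=\det(M)$, where $M$ is the $r\times r$ submatrix of the Jacobian matrix $(\partial f_i/\partial x_j)$ formed by the last $r$ columns (columns $d+1,\dots,n$). Let $f\in\mathbb K[x_1,\dots,x_n]$ have nonzero image in $\mathbb K[W]$. Let $\tilde f\in\mathbb K[x_1,\dots,x_n]$ be a polynomial whose image in $\mathcal O_W(W\cap D(h))$ coincides with that of $f$ and such that $\partial\tilde f/\partial x_i$ maps to zero in $\mathcal O_W(W\cap D(h))/\langle f\rangle$ for $i=d+1,\dots,n$; set $H_j=\partial\tilde f/\partial x_j$ for $j=1,\dots,d$, and let $\Delta(f)=\langle f,H_1,\dots,H_d\rangle\mathcal O_W(W\cap D(h))$. Then for every point $p\in W\cap D(h)$, $$\Delta(f)\,\widehat{\mathcal O_{W,p}}=\Delta_p(f).$$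
   Context: $D(h)=\{h\neq0\}$, and $\mathcal O_W(W\cap D(h))$ is the ring of regular functions on $W\cap D(h)$ (the localization of $\mathbb K[W]$ at powers of $h$). For $p=(a_1,\dots,a_n)\in W\cap D(h)$, the images $X_{p,j}$ of $x_j-a_j$, $j=1,\dots,d$, form a regular system of parameters of the regular local ring $\mathcal O_{W,p}$, and by the Cohen structure theorem $\Phi:\mathbb K[[y_1,\dots,y_d]]\to\widehat{\mathcal O_{W,p}}$, $y_j\mapsto X_{p,j}$, is an isomorphism onto the completion. For $g\in\widehat{\mathcal O_{W,p}}$ define $\partial g/\partial X_{p,j}=\Phi(\partial\Phi^{-1}(g)/\partial y_j)$ (formal partial derivative). Then $\Delta_p(f)=\langle f,\partial f/\partial X_{p,1},\dots,\partial f/\partial X_{p,d}\rangle\subset\widehat{\mathcal O_{W,p}}$. Elements of $\mathbb K[x_1,\dots,x_n]$ and of $\mathcal O_W(W\cap D(h))$ are mapped to $\widehat{\mathcal O_{W,p}}$ via the natural maps. *)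

(* Defs.v *)
From HB Require Import structures.
From mathcomp Require Import all_boot all_order all_algebra.
From mathcomp Require Import mpoly.
Set Implicit Arguments. Unset Strict Implicit. Unset Printing Implicit Defensive.
Import Order.TTheory GRing.Theory.
Local Open Scope ring_scope.

(* Formal power series K[[y_1,...,y_d]] : coefficient functions on    *)
(* monomials 'X_{1..d}.                                               *)
Definition pseries (K : fieldType) (d : nat) := 'X_{1..d} -> K.

Section PSeries.
Variables (K : fieldType) (d : nat).
Implicit Types (F G : pseries K d).

Definition ps1 : pseries K d := fun m => (m == 0%MM)%:R.
Definition psC (c : K) : pseries K d := fun m => if m == 0%MM then c else 0.
Definition psX (j : 'I_d) : pseries K d := fun m => (m == mnm1 j)%:R.
Definition psadd F G : pseries K d := fun m => F m + G m.
Definition psmul F G : pseries K d := fun m =>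
  \sum_(m1 : 'X_{1..d < (mdeg m).+1} | (bmnm m1 <= m)%MM)
     F (bmnm m1) * G (m - bmnm m1)%MM.
Definition psexp F (k : nat) : pseries K d := iter k (psmul F) ps1.
Definition psderiv (j : 'I_d) F : pseries K d :=
  fun m => (m j).+1%:R * F (mnm_add m (mnm1 j)).

Definition ps_ideal_mem (k : nat) (g : 'I_k -> pseries K d) F : Prop :=
  exists c : 'I_k -> pseries K d,
    forall m, F m = \sum_(i < k) psmul (c i) (g i) m.

Definition ps_mono (n : nat) (s : 'I_n -> pseries K d) (u : 'X_{1..n}) :
  pseries K d := foldr psmul ps1 [seq psexp (s i) (u i) | i <- enum 'I_n].
Definition ps_eval (n : nat) (p : {mpoly K[n]}) (s : 'I_n -> pseries K d) :
  pseries K d := fun m => \sum_(u <- msupp p) p@_u * ps_mono s u m.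
End PSeries.
Arguments ps1 {K d}.
Arguments psC {K d} c.
Arguments psX {K d} j.


Definition gens (K : fieldType) (d : nat) (F : pseries K d)
  (G : 'I_d -> pseries K d) : 'I_d.+1 -> pseries K d :=
  fun i => match unlift ord0 i with None => F | Some j => G j end.

(* Polynomial side: K[x_1..x_n] with n = d + r; the variables x_1..x_d *)
(* are indexed by lshift r j (j : 'I_d), and x_{d+1}..x_n by          *)
(* rshift d j (j : 'I_r).                                             *)
Section Poly.
Variables (K : fieldType) (n r : nat).

Definition mideal_mem (fs : 'I_r -> {mpoly K[n]}) (g : {mpoly K[n]}) : Prop :=
  exists c : 'I_r -> {mpoly K[n]}, g = \sum_(i < r) c i * fs i.

Definition on_zero_set (fs : 'I_r -> {mpoly K[n]}) (a : 'I_n -> K) : Prop :=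
  forall i, (fs i).@[a] = 0.

Definition jacobian_at (fs : 'I_r -> {mpoly K[n]}) (a : 'I_n -> K) : 'M[K]_(r, n) :=
  \matrix_(i < r, j < n) (mderiv j (fs i)).@[a].
End Poly.

Definition hdet (K : fieldType) (d r : nat) (fs : 'I_r -> {mpoly K[d + r]}) :
  {mpoly K[d + r]} :=
  \det (\matrix_(i < r, j < r) mderiv (rshift d j) (fs i)).

(* Main.v *)
Require Import Defs.
From HB Require Import structures.
From mathcomp Require Import all_boot all_order all_algebra.
From mathcomp Require Import mpoly.
From mathcomp.classical Require Import boolp.
Set Implicit Arguments. Unset Strict Implicit. Unset Printing Implicit Defensive.
Import GRing.Theory.
Local Open Scope ring_scope.
Section PS.
Variables (K : fieldType) (d : nat).
Definition PS := pseries K d.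
HB.instance Definition _ := gen_eqMixin PS.
HB.instance Definition _ := gen_choiceMixin PS.

Lemma psP (F G : PS) : (forall m, F m = G m) -> F = G.
Proof. exact: funext. Qed.
Definition ps0 : PS := fun _ => 0.
Definition psopp (F : PS) : PS := fun m => - F m.
Lemma psaddA : associative (@psadd K d).
Proof. by move=> F G H; apply: psP=> m; rewrite /psadd addrA. Qed.
Lemma psaddC : commutative (@psadd K d).
Proof. by move=> F G; apply: psP=> m; rewrite /psadd addrC. Qed.
Lemma psadd0 : left_id ps0 (@psadd K d).
Proof. by move=> F; apply: psP=> m; rewrite /psadd /ps0 add0r. Qed.
Lemma psaddN : left_inverse ps0 psopp (@psadd K d).
Proof. by move=> F; apply: psP=> m; rewrite /psadd /ps0 /psopp addNr. Qed.
HB.instance Definition _ := GRing.isZmodule.Build PS psaddA psaddC psadd0 psaddN.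

Definition tr N (F : PS) : {mpoly K[d]} := \sum_(k : 'X_{1..d < N}) F k *: 'X_[k].

Lemma tr_coef N F m : (tr N F)@_m = if (mdeg m < N)%N then F m else 0.
Proof.
rewrite /tr raddf_sum /=.
under eq_bigr => k _ do rewrite mcoeffZ mcoeffX.
case: ifP => hm.
  rewrite (bigD1 (BMultinom hm)) //= eqxx mulr1 big1 ?addr0 //.
  move=> k hk; case: eqP => [e|]; last by rewrite mulr0.
  by case/eqP: hk; apply: val_inj; rewrite /= e.
rewrite big1 // => k _; case: eqP => [e|]; last by rewrite mulr0.
by move: (bmdeg k); rewrite e hm.
Qed.
Lemma psmul_tr N (F G : PS) m : (mdeg m < N)%N -> psmul F G m = (tr N F * tr N G)@_m.
Proof.
move=> hN; rewrite mcoeffM /psmul.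
transitivity (\sum_(k1 : 'X_{1..d < (mdeg m).+1})
   \sum_(k2 : 'X_{1..d < (mdeg m).+1} | m == (k1 + k2)%MM) F k1 * G k2).
  rewrite [LHS]big_mkcond /=; apply: eq_bigr => k1 _.
  case: ifP => hk.
    have hb : (mdeg (m - k1)%MM < (mdeg m).+1)%N by rewrite ltnS mdegB.
    rewrite (big_pred1 (BMultinom hb)) //= => k2.
    apply/eqP/eqP => [e | ->]; first by apply: val_inj => /=; rewrite [X in (X - _)%MM]e addmC addmK.
    by rewrite /= addmC submK.
  rewrite big_pred0 // => k2; apply/negbTE/eqP => e.
  by move/negbT: hk; rewrite [X in (_ <= X)%MM]e lem_addr.
rewrite pair_big_dep /=; apply: eq_big => [k|k /eqP e]; first by [].
have := mdegD k.1 k.2; rewrite -e => e2.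
rewrite !tr_coef ifT ?ifT //; apply: leq_ltn_trans hN;
  apply: (leq_trans _ (eq_leq (esym e2))).
  exact: leq_addl.
exact: leq_addr.
Qed.
Lemma tr_coef_lt N (F : PS) m : (mdeg m < N)%N -> (tr N F)@_m = F m.
Proof. by move=> h; rewrite tr_coef h. Qed.

Definition eqN N (p q : {mpoly K[d]}) := forall m, (mdeg m < N)%N -> p@_m = q@_m.

Lemma eqN_mul N p p' q q' : eqN N p p' -> eqN N q q' -> eqN N (p * q) (p' * q').
Proof.
move=> hp hq m hm; rewrite !mcoeffM; apply: eq_bigr => k /eqP e.
have e2 := mdegD k.1 k.2; rewrite -e in e2.
rewrite hp ?hq //; apply: leq_ltn_trans hm;
  apply: (leq_trans _ (eq_leq (esym e2))).
  exact: leq_addl.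
exact: leq_addr.
Qed.

Lemma tr_mul N (F G : PS) : eqN N (tr N (psmul F G)) (tr N F * tr N G).
Proof. by move=> m hm; rewrite tr_coef_lt // (psmul_tr _ _ hm). Qed.

Lemma tr_add N (F G : PS) : tr N (psadd F G) = tr N F + tr N G.
Proof. by apply/mpolyP => m; rewrite mcoeffD !tr_coef /psadd; case: ifP; rewrite ?addr0. Qed.

Lemma tr_1 N : (0 < N)%N -> tr N ps1 = 1.
Proof.
move=> hN; apply/mpolyP => m; rewrite mcoeff1 tr_coef /ps1.
case: ifP => // h; case: eqP => // e; move: h; rewrite e mdeg0 hN.
by [].
Qed.

Lemma psmulA : associative (@psmul K d).
Proof.
move=> F G H; apply: psP => m.
have hm : (mdeg m < (mdeg m).+1)%N by [].
rewrite (psmul_tr _ _ hm) (psmul_tr _ _ hm).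
rewrite (eqN_mul (tr_mul F G) (fun _ _ => erefl)) //.
rewrite (eqN_mul (fun _ _ => erefl) (tr_mul G H)) //.
by rewrite mulrA.
Qed.

Lemma psmulC : commutative (@psmul K d).
Proof.
move=> F G; apply: psP => m.
have hm : (mdeg m < (mdeg m).+1)%N by [].
by rewrite (psmul_tr _ _ hm) (psmul_tr _ _ hm) mpoly_mulC.
Qed.

Lemma psmul1 : left_id ps1 (@psmul K d).
Proof.
move=> F; apply: psP => m.
have hm : (mdeg m < (mdeg m).+1)%N by [].
by rewrite (psmul_tr _ _ hm) tr_1 // mul1r tr_coef_lt.
Qed.

Lemma psmulDl : left_distributive (@psmul K d) (@psadd K d).
Proof.
move=> F G H; apply: psP => m.
have hm : (mdeg m < (mdeg m).+1)%N by [].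
by rewrite /psadd (psmul_tr _ _ hm) (psmul_tr _ _ hm) (psmul_tr _ _ hm) tr_add mulrDl mcoeffD.
Qed.

Lemma ps1_neq0 : (ps1 : PS) != ps0.
Proof.
apply/negP => /eqP e; have := congr1 (fun F => F 0%MM) e.
by rewrite /ps1 /ps0 eqxx /= => /eqP; rewrite oner_eq0.
Qed.

HB.instance Definition _ := GRing.Zmodule_isComNzRing.Build PS psmulA psmulC psmul1 psmulDl ps1_neq0.

Lemma PSmulE (F G : PS) : F * G = psmul F G. Proof. by []. Qed.
Lemma PSaddE (F G : PS) : F + G = psadd F G. Proof. by []. Qed.
Lemma PS1E : (1 : PS) = ps1. Proof. by []. Qed.
Lemma psB (F G : PS) m : (F - G) m = F m - G m. Proof. by []. Qed.
Lemma psD (F G : PS) m : (F + G) m = F m + G m. Proof. by []. Qed.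
Lemma psN (F : PS) m : (- F) m = - F m. Proof. by []. Qed.
Lemma ps0E m : (0 : PS) m = 0. Proof. by []. Qed.
Lemma ps1E m : (1 : PS) m = (m == 0%MM)%:R. Proof. by []. Qed.
Definition cf m (F : PS) : K := F m.
Lemma cf_zmod m : zmod_morphism (cf m). Proof. by []. Qed.
HB.instance Definition _ m := GRing.isZmodMorphism.Build PS K (cf m) (cf_zmod m).

Lemma cf_sum I (r : seq I) (P : pred I) (F : I -> PS) m :
  (\sum_(i <- r | P i) F i) m = \sum_(i <- r | P i) F i m.
Proof. exact: (raddf_sum (cf m)). Qed.

Lemma ev0_mul : multiplicative (cf 0%MM).
Proof.
split => [F G|]; last by change ((ps1 : PS) 0%MM = 1); rewrite /ps1 eqxx.
have h1 : (mdeg (0%MM : 'X_{1..d}) < 1)%N by rewrite mdeg0.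
by rewrite /cf PSmulE (psmul_tr _ _ h1) rmorphM /= !tr_coef_lt.
Qed.
HB.instance Definition _ := GRing.isMultiplicative.Build PS K (cf 0%MM) ev0_mul.

Definition psCP : K -> PS := @psC K d.
Lemma psC_zmod : zmod_morphism psCP.
Proof. by move=> a b; apply: psP => m; rewrite psB /psCP /psC; case: ifP; rewrite ?subr0. Qed.
HB.instance Definition _ := GRing.isZmodMorphism.Build K PS psCP psC_zmod.

Lemma tr_psC N a : (0 < N)%N -> tr N (psCP a) = a%:MP.
Proof.
move=> hN; apply/mpolyP => k; rewrite mcoeffC tr_coef /psCP /psC.
case: ifP => h; case: eqP => e; rewrite ?mulr1 ?mulr0 //.
by move: h; rewrite e mdeg0 hN.
Qed.

Lemma psCM a (F : PS) m : (psCP a * F) m = a * F m.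
Proof.
have hm : (mdeg m < (mdeg m).+1)%N by [].
by rewrite PSmulE (psmul_tr _ _ hm) tr_psC // mcoeffCM tr_coef_lt.
Qed.

Lemma psC_mul : multiplicative psCP.
Proof.
split => [a b|]; last by apply: psP => m; rewrite ps1E /psCP /psC; case: eqP.
apply: psP => m; rewrite psCM /psCP /psC; case: ifP; by rewrite ?mulr0.
Qed.
HB.instance Definition _ := GRing.isMultiplicative.Build K PS psCP psC_mul.

Lemma psexpE (F : PS) k : psexp F k = F ^+ k.
Proof. by elim: k => [|k IH] //=; rewrite exprS -IH. Qed.

Lemma ps_monoE n (s : 'I_n -> PS) u : ps_mono s u = mmap1 s u.
Proof.
rewrite /ps_mono /mmap1 -big_enum /=.
elim: (enum _) => [|x l IH]; first by rewrite big_nil.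
by rewrite big_cons /= IH psexpE.
Qed.

Lemma ps_evalE n (p : {mpoly K[n]}) (s : 'I_n -> PS) : ps_eval p s = mmap psCP s p.
Proof.
apply: psP => m; rewrite /ps_eval /mmap cf_sum; apply: eq_bigr => u _.
by rewrite psCM ps_monoE.
Qed.
Definition D (j : 'I_d) (F : PS) : PS := psderiv j F.

Lemma D_zmod j : zmod_morphism (D j).
Proof. by move=> F G; apply: psP => m; rewrite psB /D /psderiv psB mulrBr. Qed.
HB.instance Definition _ j := GRing.isZmodMorphism.Build PS PS (D j) (D_zmod j).

Lemma mdegU m (j : 'I_d) : mdeg (m + U_(j))%MM = (mdeg m).+1.
Proof. by rewrite mdegD mdeg1 addn1. Qed.

Lemma D_tr N j (F : PS) m : (mdeg m < N)%N -> D j F m = (mderiv j (tr N.+1 F))@_m.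
Proof.
move=> h; rewrite mcoeff_deriv tr_coef_lt ?mdegU // /D /psderiv.
by rewrite mulr_natl.
Qed.

Lemma eqN_deriv N j p q : eqN N.+1 p q -> eqN N (mderiv j p) (mderiv j q).
Proof. by move=> h m hm; rewrite !mcoeff_deriv h // mdegU. Qed.

Lemma DM j (F G : PS) : D j (F * G) = D j F * G + F * D j G.
Proof.
apply: psP => m; set N := (mdeg m).+1.
have hm : (mdeg m < N)%N by [].
rewrite (D_tr _ _ hm) (eqN_deriv j (tr_mul F G)) // mderivM mcoeffD psD.
have e1 : eqN N (tr N (D j F)) (mderiv j (tr N.+1 F)).
  by move=> k hk; rewrite tr_coef_lt // (D_tr _ _ hk).
have e2 : eqN N (tr N (D j G)) (mderiv j (tr N.+1 G)).
  by move=> k hk; rewrite tr_coef_lt // (D_tr _ _ hk).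
have e3 : forall H : PS, eqN N (tr N H) (tr N.+1 H).
  by move=> H k hk; rewrite !tr_coef_lt // ltnW.
rewrite !PSmulE !(psmul_tr _ _ hm) (eqN_mul e1 (e3 G)) // (eqN_mul (e3 F) e2) //.
Qed.

Lemma DC j a : D j (psCP a) = 0.
Proof.
apply: psP => m; rewrite ps0E /D /psderiv /psCP /psC.
case: eqP => [e|]; last by rewrite mulr0.
by have := congr1 mdeg e; rewrite mdegU mdeg0.
Qed.
Section Chain.
Variables (n : nat) (s : 'I_n -> PS) (j : 'I_d).
Local Notation phi := (mmap psCP s).

Definition Qc (p : {mpoly K[n]}) :=
  D j (phi p) = \sum_(i < n) phi (mderiv i p) * D j (s i).

Lemma Qc_add p q : Qc p -> Qc q -> Qc (p + q).
Proof.
rewrite /Qc => hp hq; rewrite rmorphD raddfD /= hp hq -big_split /=.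
by apply: eq_bigr => i _; rewrite mderivD rmorphD mulrDl.
Qed.

Lemma Qc_mul p q : Qc p -> Qc q -> Qc (p * q).
Proof.
rewrite /Qc => hp hq; rewrite rmorphM DM hp hq mulr_suml mulr_sumr -big_split /=.
apply: eq_bigr => i _; rewrite mderivM rmorphD !rmorphM mulrDl.
by congr (_ + _); rewrite -!mulrA; congr (_ * _); rewrite mulrC.
Qed.

Lemma Qc_C c : Qc c%:MP.
Proof.
rewrite /Qc mmapC DC big1 // => i _.
by rewrite mderivC rmorph0 mul0r.
Qed.

Lemma Qc_X k : Qc 'X_k.
Proof.
rewrite /Qc mmapX mmap1U (bigD1 k) //= big1 ?addr0.
  rewrite mderivX.
  have -> : mnm_sub U_(k) U_(k) = 0%MM :> 'X_{1..n}.
    by apply/mnmP => l; rewrite mnmBE subnn mnm0E.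
  by rewrite mnm1E eqxx mpolyX0 scale1r rmorph1 mul1r.
move=> i /negbTE hik; rewrite mderivX mnm1E eq_sym hik scale0r rmorph0.
by rewrite mul0r.
Qed.

Lemma chain p : Qc p.
Proof.
rewrite [p]mpolyE; apply: big_ind; first by rewrite -(rmorph0 (@mpolyC n K)); exact: Qc_C.
  exact: Qc_add.
move=> m _; rewrite -mul_mpolyC; apply: Qc_mul; first exact: Qc_C.
rewrite mpolyXE_id; apply: big_ind; first by rewrite -(rmorph1 (@mpolyC n K)); exact: Qc_C.
  exact: Qc_mul.
move=> i _; elim: (m i) => [|k IH]; first by rewrite expr0 -(rmorph1 (@mpolyC n K)); exact: Qc_C.
by rewrite exprS; apply: Qc_mul => //; exact: Qc_X.
Qed.
End Chain.
Lemma exp_low (E : PS) : E 0%MM = 0 -> forall k m, (mdeg m < k)%N -> (E ^+ k) m = 0.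
Proof.
move=> E0; elim=> [|k IH] m hm //.
rewrite exprS PSmulE /psmul big1 // => m1 hm1.
move: (bmnm m1) hm1 => {m1} m1 hm1.
case: (eqVneq m1 0%MM) => [->|nz]; first by rewrite E0 mul0r.
rewrite IH ?mulr0 //.
have e : mdeg m = (mdeg (m - m1)%MM + mdeg m1)%N by rewrite -mdegD submK.
have : (0 < mdeg m1)%N by rewrite lt0n mdeg_eq0.
move: hm; rewrite ltnS e => h1 h2.
by apply: leq_trans h1; rewrite -addn1 leq_add2l.
Qed.

Lemma mul_local N (F G G' : PS) m : (forall k, (mdeg k < N)%N -> G k = G' k) ->
  (mdeg m < N)%N -> (F * G) m = (F * G') m.
Proof.
move=> h hm; rewrite !PSmulE !(psmul_tr _ _ hm); congr (_ * _)@_m.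
by apply/mpolyP => k; rewrite !tr_coef; case: ifP => // /h ->.
Qed.

Lemma ps_unit (F : PS) : F 0%MM != 0 -> exists G : PS, G * F = 1.
Proof.
move=> F0; set c := F 0%MM.
set E : PS := 1 - psCP c^-1 * F.
have E0 : E 0%MM = 0 by rewrite /E psB ps1E psCM mulVf // eqxx /= mulr1n subrr.
pose S : PS := fun m => \sum_(k < (mdeg m).+1) (E ^+ k) m.
exists (psCP c^-1 * S); apply: psP => m; rewrite mulrC.
set N := (mdeg m).+1.
have hm : (mdeg m < N)%N by [].
rewrite (@mul_local N _ _ (psCP c^-1 * \sum_(k < N) E ^+ k)) //; last first.
  move=> k hk; rewrite !psCM cf_sum; congr (_ * _).
  rewrite /S (big_ord_widen _ (fun i => (E ^+ i) k) hk) big_mkcond /=.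
  apply: eq_bigr => i _; case: ifP => // /negbT; rewrite -leqNgt => hi.
  by rewrite exp_low.
have -> : F * (psCP c^-1 * \sum_(k < N) E ^+ k) = 1 - E ^+ N.
  rewrite mulrA [F * _]mulrC.
  have -> : psCP c^-1 * F = 1 - E by rewrite /E opprB addrCA subrr addr0.
  by rewrite -[1 - E]opprB mulNr -subrX1 opprB.
by rewrite psB exp_low // subr0.
Qed.
Lemma ev0_mmap n (s : 'I_n -> PS) p : (mmap psCP s p) 0%MM = p.@[fun i => s i 0%MM].
Proof.
change (cf 0%MM (mmap psCP s p) = p.@[fun i => s i 0%MM]).
rewrite /mmap rmorph_sum mevalE; apply: eq_bigr => u _.
rewrite rmorphM rmorph_prod /=; congr (_ * _).
  by rewrite /cf /psCP /psC eqxx.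
by apply: eq_bigr => i _; rewrite rmorphXn.
Qed.

Lemma D_lin j j' a : D j (psadd (psC a) (psX j') : PS) = (j == j')%:R.
Proof.
apply: psP => m.
have -> : (((j == j')%:R : PS) m) = (j == j')%:R * (m == 0%MM)%:R.
  by case: (j == j'); rewrite ?mul0r ?mul1r //= mulr1n ps1E.
rewrite /D /psderiv /psadd /psC /psX.
have -> : ((m + U_(j))%MM == 0%MM) = false.
  by apply/negbTE/eqP => e; have := congr1 mdeg e; rewrite mdegU mdeg0.
rewrite add0r; case: (eqVneq m 0%MM) => [->|nz].
  by rewrite add0m eq_mnm1 mnm0E mulr1 mul1r.
rewrite mulr0; have -> : ((m + U_(j))%MM == U_(j')%MM) = false; last by rewrite mulr0.
apply/negbTE/eqP => e; have := congr1 mdeg e; rewrite mdegU mdeg1.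
by case => /eqP; rewrite mdeg_eq0 (negbTE nz).
Qed.

Lemma ideal_iff (A : PS) (G : 'I_d -> PS) (X : PS) :
  ps_ideal_mem (gens A G) X <->
  exists c0 (c : 'I_d -> PS), X = c0 * A + \sum_j c j * G j.
Proof.
split.
  move=> [c hc]; exists (c ord0), (fun j => c (lift ord0 j)); apply: psP => m.
  rewrite hc; transitivity ((\sum_(i < d.+1) (c i : PS) * gens A G i) m).
    by rewrite cf_sum.
  rewrite big_ord_recl /gens unlift_none; apply: (congr1 (fun F : PS => F m)); congr (_ + _).
  by apply: eq_bigr => j _; rewrite liftK.
move=> [c0 [c ->]]; exists (gens c0 c) => m.
transitivity ((\sum_(i < d.+1) (gens c0 c i : PS) * gens A G i) m); last first.
  by rewrite cf_sum.
rewrite big_ord_recl /gens unlift_none; apply: (congr1 (fun F : PS => F m)); congr (_ + _).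
by apply: eq_bigr => j _; rewrite liftK.
Qed.

Lemma ideal_shift (A : PS) (G1 G2 e : 'I_d -> PS) :
  (forall j, G2 j = G1 j + e j * A) -> forall X : PS,
  (exists c0 (c : 'I_d -> PS), X = c0 * A + \sum_j c j * G1 j) <->
  (exists c0 (c : 'I_d -> PS), X = c0 * A + \sum_j c j * G2 j).
Proof.
move=> hG.
have hS : forall c : 'I_d -> PS,
    \sum_j c j * G2 j = \sum_j c j * G1 j + (\sum_j c j * e j) * A.
  move=> c; rewrite mulr_suml -big_split; apply: eq_bigr => j _.
  by rewrite hG mulrDr mulrA.
move=> X; split => -[c0 [c ->]].
  exists (c0 - \sum_j c j * e j), c; rewrite hS mulrBl.
  by rewrite addrA addrAC subrK.
exists (c0 + \sum_j c j * e j), c; rewrite hS mulrDl.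
by rewrite addrA addrAC.
Qed.
End PS.

Theorem lemma3p16 (K : closedFieldType) (d r : nat)
  (fs : 'I_r -> {mpoly K[d + r]}) (f ft : {mpoly K[d + r]}) :
  (forall g : {mpoly K[d + r]},
      (forall a : 'I_(d + r) -> K, on_zero_set fs a -> g.@[a] = 0) ->
      mideal_mem fs g) ->
  (forall a : 'I_(d + r) -> K, on_zero_set fs a -> \rank (jacobian_at fs a) = r) ->
  ~ mideal_mem fs f ->
  (exists k : nat, mideal_mem fs (hdet fs ^+ k * (ft - f))) ->
  (forall i : 'I_r,
     exists (k : nat) (g : {mpoly K[d + r]}),
       mideal_mem fs (hdet fs ^+ k * mderiv (rshift d i) ft - g * f)) ->
  forall a : 'I_(d + r) -> K, on_zero_set fs a -> (hdet fs).@[a] != 0 ->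
  forall s : 'I_(d + r) -> pseries K d,
    (forall j : 'I_d, s (lshift r j) = psadd (psC (a (lshift r j))) (psX j)) ->
    (forall i : 'I_(d + r), s i 0%MM = a i) ->
    (forall i : 'I_r, forall m, ps_eval (fs i) s m = 0) ->
  forall F : pseries K d,
    ps_ideal_mem
      (gens (ps_eval f s) (fun j => ps_eval (mderiv (lshift r j) ft) s)) F
    <->
    ps_ideal_mem
      (gens (ps_eval f s) (fun j => psderiv j (ps_eval f s))) F.
Proof.
move=> _ _ _ [k hk] hder a _ ha s hsl hs0 hfs F.
pose s' : 'I_(d + r) -> PS K d := s.
pose phi := mmap (@psCP K d) s'.
have fs0 i : phi (fs i) = 0.
  by apply: psP => m; rewrite /phi -ps_evalE; exact: hfs.
have ideal0 g : mideal_mem fs g -> phi g = 0.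
  by move=> [c ->]; rewrite /phi rmorph_sum big1 // => i _; rewrite rmorphM [X in _ * X = _](_ : _ = 0) ?mulr0 //; exact: fs0.
have [v hv] : exists v : PS K d, v * phi (hdet fs) = 1.
  apply: ps_unit; rewrite /phi ev0_mmap.
  by rewrite (meval_eq _ hs0).
have canc k0 (X Y : PS K d) : phi (hdet fs) ^+ k0 * X = Y -> X = v ^+ k0 * Y.
  by move=> <-; rewrite mulrA -exprMn hv expr1n mul1r.
have eft : phi ft = phi f.
  move/ideal0: hk; rewrite /phi rmorphM rmorphXn rmorphB => /canc.
  by rewrite mulr0 => /eqP; rewrite subr_eq0 => /eqP.
have [g' hg'] : exists g' : 'I_r -> PS K d,
    forall i, phi (mderiv (rshift d i) ft) = g' i * phi f.
  apply: (@fin_all_exists _ (fun _ => PS K d) (fun i g => phi (mderiv (rshift d i) ft) = g * phi f)) => i; have [k0 [g hg]] := hder i.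
  move/ideal0: hg; rewrite /phi rmorphB !rmorphM rmorphXn => /eqP; rewrite subr_eq0 => /eqP /canc ->.
  by exists (v ^+ k0 * phi g); rewrite mulrA.
pose e j := \sum_(i < r) g' i * D j (s' (rshift d i)).
have key j : (fun j => psderiv j (ps_eval f s) : PS K d) j =
    (fun j => ps_eval (mderiv (lshift r j) ft) s : PS K d) j + e j * (ps_eval f s : PS K d).
  rewrite /= !ps_evalE.
  change (D j (phi f) = phi (mderiv (lshift r j) ft) + e j * phi f).
  rewrite -eft (chain s' j ft) big_split_ord /=; congr (_ + _).
    rewrite (bigD1 j) //= /s' hsl D_lin eqxx mulr1 big1 ?addr0 // => j' /negbTE hj.
    by rewrite hsl D_lin eq_sym hj mulr0.
  rewrite /e mulr_suml; apply: eq_bigr => i _.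
  by rewrite [mmap _ _ _](hg' i) eft mulrAC.
rewrite !ideal_iff.
exact: (ideal_shift key).
Qed.
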